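(* The $\mathbb F$-algebra $\Re$ has a presentation with generators $A,B,\alpha,\beta,\delta$ and relations $A^2B-2ABA+BA^2-2AB-2BA=2A^2-2A\delta+2\alpha$, $AB^2-2BAB+B^2A-2AB-2BA=2B^2-2B\delta-2\beta$, and $\alpha,\beta,\delta$ commute with $A$ and with $B$, and $\alpha\delta=\delta\alpha$, $\beta\delta=\delta\beta$.
   Context: $\mathbb F$ is an algebraically closed field. The Racah algebra $\Re$ is the unital associative $\mathbb F$-algebra with generators $A,B,C,D$ and relations $[A,B]=[B,C]=[C,A]=2D$ together with the requirement that each of $\alpha:=[A,D]+AC-BA$, $\beta:=[B,D]+BA-CB$, $\gamma:=[C,D]+CB-AC$ is central in $\Re$; $\delta:=A+B+C$. Here $[X,Y]=XY-YX$. *)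

(* Defs.v *)
From HB Require Import structures.
From mathcomp Require Import all_boot all_order all_algebra.
Set Implicit Arguments. Unset Strict Implicit. Unset Printing Implicit Defensive.
Import GRing.Theory.
Local Open Scope ring_scope.

Section Racah.
Variables (F : fieldType) (R : algType F).

Definition comm_br (X Y : R) : R := X * Y - Y * X.

Definition ralpha (A B C D : R) : R := comm_br A D + A * C - B * A.
Definition rbeta  (A B C D : R) : R := comm_br B D + B * A - C * B.
Definition rgamma (A B C D : R) : R := comm_br C D + C * B - A * C.

(* defining relations of the Racah algebra Re on generators A,B,C,D,
   interpreted in an F-algebra R: "x is central in Re" becomes
   "x commutes with each of the generators A,B,C,D". *)
Definition commutes_gens (x A B C D : R) : Prop :=
  [/\ x * A = A * x, x * B = B * x, x * C = C * x & x * D = D * x].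

Definition racah_rel (A B C D : R) : Prop :=
  [/\ [/\ comm_br A B = D *+ 2, comm_br B C = D *+ 2 & comm_br C A = D *+ 2],
      commutes_gens (ralpha A B C D) A B C D,
      commutes_gens (rbeta A B C D) A B C D &
      commutes_gens (rgamma A B C D) A B C D].

Definition pres_rel (A B a b d : R) : Prop :=
  [/\ A ^+ 2 * B - (A * B * A) *+ 2 + B * A ^+ 2 - (A * B) *+ 2 - (B * A) *+ 2
        = (A ^+ 2) *+ 2 - (A * d) *+ 2 + a *+ 2,
      A * B ^+ 2 - (B * A * B) *+ 2 + B ^+ 2 * A - (A * B) *+ 2 - (B * A) *+ 2
        = (B ^+ 2) *+ 2 - (B * d) *+ 2 - b *+ 2,
      [/\ a * A = A * a, a * B = B * a, b * A = A * b & b * B = B * b],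
      (d * A = A * d /\ d * B = B * d) &
      (a * d = d * a /\ b * d = d * b)].
End Racah.

(* Main.v *)
Require Import Defs.
From HB Require Import structures.
From mathcomp Require Import all_boot all_order all_algebra.
From Stdlib Require Ncring Ncring_tac.
Import GRing.Theory.
Local Open Scope ring_scope.

Section NC.
Variable (F : fieldType) (R : algType F).
#[local] Instance R_ops : @Ncring.Ring_ops R 0%R 1%R (@GRing.add R) (@GRing.mul R)
  (fun x y => x - y)%R (@GRing.opp R) (@eq R) := {}.
#[local] Instance R_ring : Ncring.Ring (Ro := R_ops).
Proof.
split.
- exact: (@RelationClasses.eq_equivalence R).
- by move=> ? ? -> ? ? ->.
- by move=> ? ? -> ? ? ->.
- by move=> ? ? -> ? ? ->.
- by move=> ? ? ->.
- exact: add0r. - exact: addrC. - exact: addrA. - exact: mul1r. - exact: mulr1.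
- exact: mulrA. - exact: mulrDl. - move=> x y z; exact: mulrDr.
- by []. - exact: subrr.
Qed.

Lemma zf {x y : R} : x = y -> x - y = 0.
Proof. by move=> ->; rewrite subrr. Qed.

Lemma eqz (z L M : R) : z = 0 -> L - M = z -> L = M.
Proof. by move=> -> /eqP; rewrite subr_eq0 => /eqP. Qed.

Lemma eq_by2 (h2 : (2 : F) != 0) (z L M : R) : z = 0 -> (L - M) *+ 2 = z -> L = M.
Proof.
move=> -> h; apply/eqP; rewrite -subr_eq0; apply/eqP.
have : (2 : F) *: (L - M) = 0 by rewrite scaler_nat.
by move/eqP; rewrite scaler_eq0 (negbTE h2) /= => /eqP.
Qed.

Lemma half_eq (h2 : (2 : F) != 0) (x y : R) : x *+ 2 = y *+ 2 -> x = y.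
Proof.
move=> h; apply: (@eq_by2 h2 0) => //; by rewrite mulrnBl h subrr.
Qed.

Ltac simpz := rewrite ?(mulr0, mul0r, mul0rn, oppr0, addr0, add0r, subr0, sub0r).
Ltac nc := rewrite /ralpha /rbeta /rgamma /comm_br ?mulr2n ?expr2;
  Ncring_tac.non_commutative_ring.

Lemma part1 (A B C D : R) : racah_rel A B C D ->
     pres_rel A B (ralpha A B C D) (rbeta A B C D) (A + B + C).
Proof.
case=> [[e1 e2 e3] [aA aB aC aD] [bA bB bC bD] _].
move: (zf e1) (zf e2) (zf e3) => z1 z2 z3.
move: (zf aA) (zf aB) (zf aC) (zf bA) (zf bB) (zf bC) => zaA zaB zaC zbA zbB zbC.
have dA : (A + B + C) * A = A * (A + B + C).
  by apply: (@eqz ((comm_br C A - D *+ 2) - (comm_br A B - D *+ 2)));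
    [rewrite z1 z3; simpz | nc].
have dB : (A + B + C) * B = B * (A + B + C).
  by apply: (@eqz ((comm_br A B - D *+ 2) - (comm_br B C - D *+ 2)));
    [rewrite z1 z2; simpz | nc].
split => //.
- apply: (@eqz (A * (comm_br A B - D *+ 2) - (comm_br A B - D *+ 2) * A)).
    by rewrite z1; simpz.
  nc.
- apply: (@eqz ((comm_br A B - D *+ 2) * B - B * (comm_br A B - D *+ 2)
     - (comm_br A B - D *+ 2) *+ 2 + (comm_br B C - D *+ 2) *+ 2)).
    by rewrite z1 z2; simpz.
  nc.
- split.
  + apply: (@eqz ((ralpha A B C D * A - A * ralpha A B C D) +
       (ralpha A B C D * B - B * ralpha A B C D) + (ralpha A B C D * C - C * ralpha A B C D))).
      by rewrite zaA zaB zaC; simpz.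
    nc.
  + apply: (@eqz ((rbeta A B C D * A - A * rbeta A B C D) +
       (rbeta A B C D * B - B * rbeta A B C D) + (rbeta A B C D * C - C * rbeta A B C D))).
      by rewrite zbA zbB zbC; simpz.
    set b := rbeta A B C D; nc.
Qed.

Lemma part2 (h2 : (2 : F) != 0) (A B C D C' D' : R) : racah_rel A B C D -> racah_rel A B C' D' ->
     ralpha A B C D = ralpha A B C' D' -> rbeta A B C D = rbeta A B C' D' ->
     A + B + C = A + B + C' -> C = C' /\ D = D'.
Proof.
case=> [[e1 _ _] _ _ _] [[e1' _ _] _ _ _] _ _ /addrI eC; split => //.
by apply: (half_eq h2); rewrite -e1 -e1'.
Qed.

Lemma comm3 (x d A B : R) : x * d = d * x -> x * A = A * x -> x * B = B * x ->
  x * (d - A - B) = (d - A - B) * x.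
Proof.
move=> /zf h1 /zf h2 /zf h3.
by apply: (@eqz ((x * d - d * x) - (x * A - A * x) - (x * B - B * x)));
  [rewrite h1 h2 h3; simpz | nc].
Qed.

Lemma commN (x y A : R) : x * A = A * x -> y * A = A * y -> - (x + y) * A = A * - (x + y).
Proof.
move=> /zf h1 /zf h2.
by apply: (@eqz (- ((x * A - A * x) + (y * A - A * y))));
  [rewrite h1 h2; simpz | nc].
Qed.

Lemma commAB (x A B : R) : x * A = A * x -> x * B = B * x ->
  x * comm_br A B = comm_br A B * x.
Proof.
move=> /zf h1 /zf h2.
by apply: (@eqz ((x * A - A * x) * B + A * (x * B - B * x) - (x * B - B * x) * A
   - B * (x * A - A * x))); [rewrite h1 h2; simpz | nc].
Qed.

Ltac getl H := match type of H with ?e = _ => e end.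

Lemma part3 (h2 : (2 : F) != 0) (A B a b d : R) : pres_rel A B a b d ->
     exists C D : R, [/\ racah_rel A B C D, ralpha A B C D = a,
                         rbeta A B C D = b & A + B + C = d].
Proof.
case=> r1 r2 [aA aB bA bB] [dA dB] [ad bd].
move: (zf r1) (zf r2) => zr1 zr2.
pose D := (2:F)^-1 *: comm_br A B.
have hD : comm_br A B = D *+ 2.
  by rewrite /D -scaler_nat scalerA mulfV // scale1r.
have hDc : forall x, x * A = A * x -> x * B = B * x -> x * D = D * x.
  by move=> x xA xB; rewrite /D -scalerAr -scalerAl commAB.
clearbody D.
move: (zf hD) (zf dA) (zf dB) => zD zdA zdB.
have Ea : ralpha A B (d - A - B) D = a.
  let e := getl zr1 in
  apply: (@eq_by2 h2 (e - (A * (comm_br A B - D *+ 2) - (comm_br A B - D *+ 2) * A)));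
  [by rewrite zr1 zD; simpz | nc].
have Eb : rbeta A B (d - A - B) D = b.
  let e := getl zr2 in
  apply: (@eq_by2 h2 (- e - (B * (comm_br A B - D *+ 2) - (comm_br A B - D *+ 2) * B)
      - (d * B - B * d) *+ 2));
  [by rewrite zr2 zD zdB; simpz | nc].
have dD := hDc d dA dB.
move: (zf dD) (zf Ea) (zf Eb) => zdD zEa zEb.
have Eg : rgamma A B (d - A - B) D = - (a + b).
  apply: (@eqz ((d * D - D * d) - (ralpha A B (d - A - B) D - a)
     - (rbeta A B (d - A - B) D - b))); [by rewrite zdD zEa zEb; simpz | nc].
have gA := commN _ _ _ aA bA.
have gB := commN _ _ _ aB bB.
have ad' : (a + b) * d = d * (a + b) by rewrite mulrDl mulrDr ad bd.
have gd : - (a + b) * d = d * - (a + b) by rewrite mulNr mulrN ad'.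
exists (d - A - B), D; split => //; last first.
  by apply: (@eqz 0) => //; nc.
split.
- split => //.
  + by apply: (@eqz ((comm_br A B - D *+ 2) - (d * B - B * d)));
      [rewrite zD zdB; simpz | nc].
  + by apply: (@eqz ((comm_br A B - D *+ 2) + (d * A - A * d)));
      [rewrite zD zdA; simpz | nc].
- rewrite Ea; split => //; [exact: comm3 | exact: hDc].
- rewrite Eb; split => //; [exact: comm3 | exact: hDc].
- rewrite Eg; split => //; [exact: comm3 | exact: hDc].
Qed.
End NC.

Theorem lemma2p3 (F : closedFieldType) (h2 : (2 : F) != 0) (R : algType F) :
  (forall A B C D : R, racah_rel A B C D ->
     pres_rel A B (ralpha A B C D) (rbeta A B C D) (A + B + C)) /\
  (forall A B C D C' D' : R, racah_rel A B C D -> racah_rel A B C' D' ->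
     ralpha A B C D = ralpha A B C' D' -> rbeta A B C D = rbeta A B C' D' ->
     A + B + C = A + B + C' -> C = C' /\ D = D') /\
  (forall A B a b d : R, pres_rel A B a b d ->
     exists C D : R, [/\ racah_rel A B C D, ralpha A B C D = a,
                         rbeta A B C D = b & A + B + C = d]).
Proof.
split; first exact: part1.
split; [exact: part2 | exact: part3].
Qed.
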